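(* Let $T$ be a rooted binary phylogenetic tree with root of out-degree 2 and leaf set $X$, $|X|\ge3$, under the $N_2$ model. Let $y,z$ be a cherry with parent $w$, $p_y,p_z$ the substitution probabilities of $(w,y),(w,z)$, $\theta=(1-p_y)(1-p_z)+p_yp_z$ and $\pi=p_yp_z/\theta$. Then $$RA_\varphi(T)=\theta\cdot RA_\varphi(T'_\pi)+(1-\theta)\cdot RA_\varphi(T'_{0.5}).$$
   Context: A rooted binary phylogenetic tree is a finite tree with a distinguished root vertex $\rho$, all edges directed away from $\rho$, in which $\rho$ has out-degree 2 (or 1), and every other vertex has in-degree 1 and out-degree 0 or 2; out-degree-0 vertices are leaves. Under the Neyman 2-state model $N_2$, each edge $e$ carries a substitution probability $p_e\in[0,\frac12]$; given the root state, states propagate independently along edges, each edge $(u,v)$ changing state with probability $p_e$; $f$ is the restriction of the states to the leaves. The coin-toss method $\varphi$: leaves get their states $f(x)$; proceeding towards the root, a vertex whose two children have equal states gets that state, otherwise one of the two states chosen by an independent fair coin toss; a vertex with a single child gets its child's state. $RA_\varphi(T)$ is the probability that the state assigned to the root equals the true root state. Vertices of in- and out-degree 1 may be suppressed (merging consecutive edges with substitution probabilities $a,b$ into one with probability $a+b-2ab$). For $q\in[0,\frac12]$, $T'_q$ is obtained from $T$ by deleting the leaves $y,z$ and their incident edges, attaching a new leaf $w'$ to $w$ via an edge with substitution probability $q$, and suppressing $w$; in particular $T'_{0.5}$ is $T'_q$ with $q=\frac12$. *)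

(* Defs.v *)
From Stdlib Require Import Reals List Bool.
Import ListNotations.
Open Scope R_scope.

(* Rooted binary trees whose every vertex has out-degree 0 (leaf) or 2.
   Each child edge carries its substitution probability:
   [Node p1 t1 p2 t2] has edges with probabilities p1 (to t1) and p2 (to t2).
   Leaves are identified by their left-to-right position. *)
Inductive tree : Type :=
| Leaf : tree
| Node : R -> tree -> R -> tree -> tree.

Fixpoint nleaves (t : tree) : nat :=
  match t with
  | Leaf => 1%nat
  | Node _ a _ b => (nleaves a + nleaves b)%nat
  end.

Fixpoint valid (t : tree) : Prop :=
  match t with
  | Leaf => True
  | Node p1 a p2 b => 0 <= p1 <= 1/2 /\ 0 <= p2 <= 1/2 /\ valid a /\ valid b
  end.

Fixpoint all_chars (n : nat) : list (list bool) :=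
  match n with
  | O => [[]]
  | S m => map (cons false) (all_chars m) ++ map (cons true) (all_chars m)
  end.

Definition sumR {A : Type} (g : A -> R) (l : list A) : R :=
  fold_right (fun x acc => g x + acc) 0 l.

Definition trans (p : R) (a b : bool) : R := if Bool.eqb a b then 1 - p else p.

(* lik t s f : probability under N2 that the leaves of t (left to right)
   show the character f, given state s at the root of t. *)
Fixpoint lik (t : tree) (s : bool) (f : list bool) : R :=
  match t with
  | Leaf => match f with [x] => if Bool.eqb x s then 1 else 0 | _ => 0 end
  | Node p1 a p2 b =>
      let f1 := firstn (nleaves a) f in
      let f2 := skipn (nleaves a) f in
      sumR (fun s1 => trans p1 s s1 * lik a s1 f1) [false; true] *
      sumR (fun s2 => trans p2 s s2 * lik b s2 f2) [false; true]
  end.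

(* coin t f a : probability that the coin-toss method assigns state a to the
   root of t, given leaf character f (coin tosses fair and independent). *)
Fixpoint coin (t : tree) (f : list bool) (a : bool) : R :=
  match t with
  | Leaf => match f with [x] => if Bool.eqb x a then 1 else 0 | _ => 0 end
  | Node _ l _ r =>
      let f1 := firstn (nleaves l) f in
      let f2 := skipn (nleaves l) f in
      coin l f1 a * coin r f2 a
      + / 2 * (coin l f1 a * coin r f2 (negb a) + coin l f1 (negb a) * coin r f2 a)
  end.

(* RA_phi(T): probability that the reconstructed root state equals the true
   root state, the true root state being uniform on {0,1}. *)
Definition RA (t : tree) : R :=
  / 2 * sumR (fun a => sumR (fun f => lik t a f * coin t f a) (all_chars (nleaves t)))
             [false; true].

(* One-hole contexts: locate a subtree (here the cherry below w). *)
Inductive ctx : Type :=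
| Hole : ctx
| CL : R -> ctx -> R -> tree -> ctx
| CR : R -> tree -> R -> ctx -> ctx.

Fixpoint plug (c : ctx) (t : tree) : tree :=
  match c with
  | Hole => t
  | CL p1 c' p2 b => Node p1 (plug c' t) p2 b
  | CR p1 a p2 c' => Node p1 a p2 (plug c' t)
  end.

Definition is_hole (c : ctx) : bool := match c with Hole => true | _ => false end.

Fixpoint plug_mod (c : ctx) (g : R -> R) (t : tree) : tree :=
  match c with
  | Hole => t
  | CL p1 c' p2 b => Node (if is_hole c' then g p1 else p1) (plug_mod c' g t) p2 b
  | CR p1 a p2 c' => Node p1 a (if is_hole c' then g p2 else p2) (plug_mod c' g t)
  end.

(* substitution probability of two merged consecutive edges *)
Definition merge (a b : R) : R := a + b - 2 * a * b.

(* T'_q for T = plug c (cherry y z below w): y, z deleted, a new leaf w'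
   attached to w by an edge with probability q, then w suppressed. *)
Definition Tprime (c : ctx) (q : R) : tree := plug_mod c (fun pw => merge pw q) Leaf.

(* Main.v *)
Require Import Defs.
From Stdlib Require Import Reals Lra Lia List Bool.
Import ListNotations.
Open Scope R_scope.

Lemma sumR_app {A} (g : A -> R) l1 l2 : sumR g (l1 ++ l2) = sumR g l1 + sumR g l2.
Proof. induction l1; simpl; [ring|rewrite IHl1; ring]. Qed.
Lemma sumR_map {A B} (g : B -> R) (h : A -> B) l : sumR g (map h l) = sumR (fun x => g (h x)) l.
Proof. induction l; simpl; [ring|rewrite IHl; ring]. Qed.

Lemma sumR_cons {A} (g : A -> R) x l : sumR g (x :: l) = g x + sumR g l.
Proof. reflexivity. Qed.
Lemma sumR_nil {A} (g : A -> R) : sumR g [] = 0.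
Proof. reflexivity. Qed.

Definition S (L : list (list bool)) (A x : list bool -> R) := sumR (fun f => A f * x f) L.

Lemma sum_split n m (G : list bool -> list bool -> R) (Hf : list bool -> R) :
  (forall f, Hf f = G (firstn n f) (skipn n f)) ->
  sumR Hf (all_chars (n + m)) = sumR (fun f1 => sumR (fun f2 => G f1 f2) (all_chars m)) (all_chars n).
Proof.
  revert G Hf. induction n; intros G Hf HH.
  - simpl. rewrite Rplus_0_r. induction (all_chars m); simpl; [ring|]. rewrite HH, IHl. reflexivity.
  - simpl. rewrite !sumR_app, !sumR_map. f_equal.
    + apply (IHn (fun f1 f2 => G (false :: f1) f2)). intros; rewrite HH; reflexivity.
    + apply (IHn (fun f1 f2 => G (true :: f1) f2)). intros; rewrite HH; reflexivity.
Qed.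

Lemma inner L2 (B y1 y2 : list bool -> R) al u v :
  sumR (fun f2 => (al * B f2) * (u * y1 f2 + /2 * (u * y2 f2 + v * y1 f2))) L2
  = al * u * S L2 B y1 + /2 * (al * u * S L2 B y2 + al * v * S L2 B y1).
Proof. unfold S; induction L2; simpl; [ring|rewrite IHL2; ring]. Qed.

Lemma big L1 L2 (A B x1 x2 y1 y2 : list bool -> R) :
  sumR (fun f1 => sumR (fun f2 => (A f1 * B f2) * (x1 f1 * y1 f2 + /2 * (x1 f1 * y2 f2 + x2 f1 * y1 f2))) L2) L1
  = S L1 A x1 * S L2 B y1 + /2 * (S L1 A x1 * S L2 B y2 + S L1 A x2 * S L2 B y1).
Proof. unfold S at 1 3 5; induction L1; simpl; [ring|]. rewrite inner, IHL1. ring. Qed.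

Definition J t s a := sumR (fun f => lik t s f * coin t f a) (all_chars (nleaves t)).
Definition K p t s a := trans p s false * J t false a + trans p s true * J t true a.
Definition Fk (K1 K2 : bool -> bool -> R) (s a : bool) :=
  K1 s a * K2 s a + /2 * (K1 s a * K2 s (negb a) + K1 s (negb a) * K2 s a).

Lemma mix L (w : bool -> R) (g : bool -> list bool -> R) (h : list bool -> R) :
  S L (fun f => sumR (fun s1 => w s1 * g s1 f) [false; true]) h
  = w false * sumR (fun f => g false f * h f) L + w true * sumR (fun f => g true f * h f) L.
Proof. unfold S; induction L; [simpl; ring|]. rewrite !sumR_cons, IHL. simpl. ring. Qed.

Lemma JNode p1 l p2 r s a : J (Node p1 l p2 r) s a = Fk (K p1 l) (K p2 r) s a.
Proof.
  unfold J at 1; cbn [nleaves lik coin].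
  rewrite (sum_split (nleaves l) (nleaves r)
    (fun f1 f2 => (sumR (fun s1 => trans p1 s s1 * lik l s1 f1) [false; true] *
                  sumR (fun s2 => trans p2 s s2 * lik r s2 f2) [false; true]) *
                 (coin l f1 a * coin r f2 a + /2 * (coin l f1 a * coin r f2 (negb a) + coin l f1 (negb a) * coin r f2 a))))
    by (intros; reflexivity).
  rewrite (big _ _ (fun f1 => sumR (fun s1 => trans p1 s s1 * lik l s1 f1) [false; true])
                  (fun f2 => sumR (fun s2 => trans p2 s s2 * lik r s2 f2) [false; true])
                  (fun f1 => coin l f1 a) (fun f1 => coin l f1 (negb a))
                  (fun f2 => coin r f2 a) (fun f2 => coin r f2 (negb a))).
  rewrite !mix. unfold Fk, K, J. reflexivity.
Qed.

Lemma KLeaf p s a : K p Leaf s a = trans p s a.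
Proof. unfold K, J, trans; destruct s, a; simpl; ring. Qed.

Lemma JCL p1 c' p2 b g t s a : J (plug_mod (CL p1 c' p2 b) g t) s a
  = Fk (K (if is_hole c' then g p1 else p1) (plug_mod c' g t)) (K p2 b) s a.
Proof. apply JNode. Qed.
Lemma JCR p1 b p2 c' g t s a : J (plug_mod (CR p1 b p2 c') g t) s a
  = Fk (K p1 b) (K (if is_hole c' then g p2 else p2) (plug_mod c' g t)) s a.
Proof. apply JNode. Qed.

Lemma ctx_lin (c : ctx) g1 g2 g3 t1 t2 t3 th :
  is_hole c = false ->
  (forall p s a, K (g1 p) t1 s a = th * K (g2 p) t2 s a + (1 - th) * K (g3 p) t3 s a) ->
  forall s a, J (plug_mod c g1 t1) s a = th * J (plug_mod c g2 t2) s a + (1 - th) * J (plug_mod c g3 t3) s a.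
Proof.
  intros Hc HK. induction c as [|p1 c' IH p2 b|p1 b p2 c' IH]; [discriminate| |]; intros s a.
  - rewrite !JCL; unfold Fk.
    destruct c' as [|q1 c'' q2 b'|q1 b' q2 c'']; cbn [is_hole].
    + cbn [plug_mod]. rewrite !HK. ring.
    + unfold K. rewrite !IH by reflexivity. ring.
    + unfold K. rewrite !IH by reflexivity. ring.
  - rewrite !JCR; unfold Fk.
    destruct c' as [|q1 c'' q2 b'|q1 b' q2 c'']; cbn [is_hole].
    + cbn [plug_mod]. rewrite !HK. ring.
    + unfold K. rewrite !IH by reflexivity. ring.
    + unfold K. rewrite !IH by reflexivity. ring.
Qed.

Lemma valid_plug c t : valid (plug c t) -> valid t.
Proof. induction c; simpl; tauto. Qed.

Lemma plug_eq c t : plug c t = plug_mod c (fun p => p) t.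
Proof. induction c as [|p1 c IH p2 b|p1 b p2 c IH]; simpl; rewrite ?IH; try destruct (is_hole c); reflexivity. Qed.

Lemma RA_J t : RA t = / 2 * (J t false false + J t true true).
Proof. unfold RA, J; simpl. ring. Qed.

Theorem theorem4 (c : ctx) (py pz : R) :
  valid (plug c (Node py Leaf pz Leaf)) ->
  (3 <= nleaves (plug c (Node py Leaf pz Leaf)))%nat ->
  let theta := (1 - py) * (1 - pz) + py * pz in
  let pi := py * pz / theta in
  RA (plug c (Node py Leaf pz Leaf))
  = theta * RA (Tprime c pi) + (1 - theta) * RA (Tprime c (1/2)).
Proof.
  intros Hv Hn theta pi.
  destruct (valid_plug _ _ Hv) as [Hy [Hz _]].
  assert (Hth : theta <> 0) by (unfold theta; nra).
  assert (Hc : is_hole c = false) by (destruct c; [simpl in Hn; lia|reflexivity|reflexivity]).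
  unfold Tprime. rewrite plug_eq, !RA_J.
  assert (HK : forall p s a, K p (Node py Leaf pz Leaf) s a
     = theta * K (merge p pi) Leaf s a + (1 - theta) * K (merge p (1/2)) Leaf s a).
  { intros p s a. rewrite !KLeaf. unfold K. rewrite !JNode. unfold Fk. rewrite !KLeaf.
    unfold pi, theta in *. destruct s, a; unfold trans, merge; simpl; field; exact Hth. }
  rewrite !(ctx_lin c (fun p => p) (fun p => merge p pi) (fun p => merge p (1/2))
             (Node py Leaf pz Leaf) Leaf Leaf theta Hc HK).
  ring.
Qed.
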